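(* Let $A$ be a unital C*-algebra, let $f\in A$ be self-adjoint, and let $\varepsilon>0$. Then there exist $n\in\mathbb N$, $\delta>0$ and self-adjoint $f_1,\dots,f_n\in A$ such that $\|f-f_i\|<\varepsilon$ for $i=1,\dots,n$, and $\frac1n(\tau(\chi_\delta(f_1))+\cdots+\tau(\chi_\delta(f_n)))<\varepsilon$ for all tracial states $\tau\in\mathrm{T}(A)$.
   Context: $\chi_\delta\colon\mathbb R\to\mathbb R$ is the continuous function equal to $1$ on $\{|t|<\delta/2\}$, $0$ on $\{|t|>\delta\}$, and linear otherwise; $\chi_\delta(f_i)$ is defined by continuous functional calculus. *)

(* Defs.v *)
From mathcomp Require Import all_boot all_algebra.
From mathcomp Require Import complex.
From mathcomp Require Import boolp classical_sets reals.
Import GRing.Theory Num.Theory.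
Set Implicit Arguments. Unset Strict Implicit. Unset Printing Implicit Defensive.
Local Open Scope ring_scope.

Record cstar_algebra (R : realType) := CStarAlgebra {
  cs_car :> algType R[i];
  cs_norm : cs_car -> R;
  cs_star : cs_car -> cs_car;
  cs_norm_ge0 : forall x, 0 <= cs_norm x;
  cs_norm_eq0 : forall x, cs_norm x = 0 -> x = 0;
  cs_norm_triangle : forall x y, cs_norm (x + y) <= cs_norm x + cs_norm y;
  cs_norm_scale : forall (c : R[i]) x,
      ((cs_norm (c *: x))%:C)%C = `|c| * ((cs_norm x)%:C)%C;
  cs_norm_mul : forall x y, cs_norm (x * y) <= cs_norm x * cs_norm y;
  cs_star_add : forall x y, cs_star (x + y) = cs_star x + cs_star y;
  cs_star_scale : forall (c : R[i]) x, cs_star (c *: x) = c^* *: cs_star x;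
  cs_star_mul : forall x y, cs_star (x * y) = cs_star y * cs_star x;
  cs_star_invol : forall x, cs_star (cs_star x) = x;
  cs_cstar_id : forall x, cs_norm (cs_star x * x) = cs_norm x ^+ 2;
  cs_complete : forall u : nat -> cs_car,
      (forall e : R, 0 < e -> exists N : nat, forall m n : nat,
          (N <= m)%N -> (N <= n)%N -> cs_norm (u m - u n) < e) ->
      exists l : cs_car, forall e : R, 0 < e -> exists N : nat,
          forall n : nat, (N <= n)%N -> cs_norm (u n - l) < e
}.

Section CStarDefs.
Variables (R : realType) (A : cstar_algebra R).

Definition self_adjoint (f : A) : Prop := cs_star f = f.

Definition tracial_state (tau : A -> R[i]) : Prop :=
  [/\ forall x y : A, tau (x + y) = tau x + tau y,
      forall (c : R[i]) (x : A), tau (c *: x) = c * tau x,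
      forall x : A, 0 <= tau (cs_star x * x),
      tau 1 = 1 &
      forall x y : A, tau (x * y) = tau (y * x)].

Definition peval (p : {poly R}) (f : A) : A :=
  \sum_(k < size p) ((p`_k)%:C)%C *: f ^+ k.

(* continuous functional calculus for self-adjoint f and continuous
   h : R -> R: h(f) = lim p_k(f) for real polynomials p_k -> h uniformly
   on [-||f||, ||f||] (an interval containing the spectrum of f). *)
Definition cfc (h : R -> R) (f : A) : A :=
  xget 0 [set l : A | exists p : nat -> {poly R},
    (forall e : R, 0 < e -> exists N : nat, forall k : nat, (N <= k)%N ->
        forall t : R, `|t| <= cs_norm f -> `|h t - (p k).[t]| < e) /\
    (forall e : R, 0 < e -> exists N : nat, forall k : nat, (N <= k)%N ->
        cs_norm (peval (p k) f - l) < e)].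

End CStarDefs.

Definition chi (R : realType) (delta : R) (t : R) : R :=
  if `|t| < delta / 2 then 1
  else if delta < `|t| then 0
  else (delta - `|t|) / (delta / 2).

(* Main.v *)
Require Import Defs.
From mathcomp Require Import all_boot all_order all_algebra.
From mathcomp Require Import complex.
From mathcomp Require Import boolp classical_sets reals.
From mathcomp Require Import ring lra.
Import Order.TTheory GRing.Theory Num.Theory.
Set Implicit Arguments. Unset Strict Implicit. Unset Printing Implicit Defensive.
Local Open Scope ring_scope.
Section Basics.
Context {R : realType}.

Lemma normcR (r : R) : `|(r%:C)%C| = ((`|r|)%:C)%C.
Proof. by rewrite normc_def /= expr0n /= addr0 sqrtr_sqr. Qed.

Lemma rc_inj (a b : R) : (a%:C)%C = (b%:C)%C -> a = b.
Proof. by case. Qed.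

Context {A : cstar_algebra R}.
Local Notation N := (@cs_norm R A).
Local Notation st := (@cs_star R A).
Definition sc (r : R) : A := (r%:C)%C *: (1 : A).

Lemma N_scaleR (r : R) (x : A) : N ((r%:C)%C *: x) = `|r| * N x.
Proof. by apply: rc_inj; rewrite cs_norm_scale normcR rmorphM. Qed.

Lemma N0 : N 0 = 0.
Proof. by have := N_scaleR 0 0; rewrite scale0r normr0 mul0r. Qed.

Lemma NN (x : A) : N (- x) = N x.
Proof. by have := N_scaleR (-1) x; rewrite rmorphN rmorph1 scaleN1r normrN normr1 mul1r. Qed.

Lemma NB (x y : A) : N (x - y) = N (y - x).
Proof. by rewrite -NN opprB. Qed.

Lemma Ntri3 (x y z : A) : N (x - z) <= N (x - y) + N (y - z).
Proof. by have := cs_norm_triangle (x - y) (y - z); rewrite addrA subrK. Qed.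

Lemma NtriB (x y : A) : N (x - y) <= N x + N y.
Proof. by have := cs_norm_triangle x (- y); rewrite NN. Qed.

Lemma N_eq0 (x : A) : (N x = 0) <-> (x = 0).
Proof. by split=> [/cs_norm_eq0|->] //; rewrite N0. Qed.

Lemma st0 : st 0 = 0.
Proof.
have := cs_star_add (0:A) 0; rewrite addr0 => h.
by apply/(addrI (st 0)); rewrite addr0 -h.
Qed.

Lemma stN (x : A) : st (- x) = - st x.
Proof.
apply/eqP; rewrite -subr_eq0 opprK; have := cs_star_add (- x) x.
by rewrite addNr st0 => <-.
Qed.

Lemma stB (x y : A) : st (x - y) = st x - st y.
Proof. by rewrite cs_star_add stN. Qed.

Lemma stR (r : R) (x : A) : st ((r%:C)%C *: x) = (r%:C)%C *: st x.
Proof. rewrite cs_star_scale; congr (_ *: _). exact: conjc_real. Qed.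

Lemma st1 : st 1 = 1.
Proof.
have := cs_star_mul (st 1) (1:A); rewrite !mulr1 cs_star_invol => h.
by rewrite [RHS]h mulr1.
Qed.

Lemma stsc (r : R) : st (sc r) = sc r.
Proof. rewrite /sc stR; congr (_ *: _); exact: st1. Qed.

Lemma N1 : N 1 <= 1.
Proof.
have := cs_cstar_id (1:A); rewrite st1 mulr1 => h.
have [->|nz] := eqVneq (N 1) 0; first by [].
have : N 1 * N 1 = N 1 * 1 by rewrite mulr1 -expr2 -h.
by move/(mulfI nz) ->.
Qed.

Lemma N_sc (r : R) : N (sc r) <= `|r|.
Proof.
rewrite /sc N_scaleR; have := N1; have := normr_ge0 r.
have := cs_norm_ge0 (1:A); nra.
Qed.

Lemma Nst (x : A) : N (st x) = N x.
Proof.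
suff H : forall y : A, N y <= N (st y).
  by apply/eqP; rewrite eq_le H andbT -{2}(cs_star_invol x) H.
move=> y; have := cs_cstar_id y; have := cs_norm_mul (st y) y.
have := cs_norm_ge0 y; have := cs_norm_ge0 (st y).
move=> h1 h2 h3 h4; rewrite h4 expr2 in h3.
have [->|nz] := eqVneq (N y) 0; first by [].
have yp : 0 < N y by rewrite lt_def nz h2.
by rewrite -(ler_pM2r yp).
Qed.

Lemma N_mulB (x y x' y' : A) :
  N (x * y - x' * y') <= N x * N (y - y') + N (x - x') * N y'.
Proof.
have -> : x * y - x' * y' = x * (y - y') + (x - x') * y'.
  by rewrite mulrBr mulrBl addrA subrK.
apply: le_trans (cs_norm_triangle _ _) _.
by apply: lerD; apply: cs_norm_mul.
Qed.

End Basics.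
Section Conv.
Context {R : realType}.

Lemma bernoulli (s : R) (n : nat) : 0 <= s -> 1 + n%:R * s <= (1 + s) ^+ n.
Proof.
move=> s0; elim: n => [|n IH]; first by rewrite mul0r addr0 expr0.
rewrite exprS -natr1 mulrDl mul1r.
have h1 : 0 <= (1 + s) ^+ n by apply: exprn_ge0; lra.
have h2 : 0 <= n%:R * s by apply: mulr_ge0.
nra.
Qed.

Lemma geo_small (r e : R) : 0 <= r -> r < 1 -> 0 < e -> exists n : nat, r ^+ n < e.
Proof.
move=> r0 r1 e0.
have [->|rn0] := eqVneq r 0; first by exists 1%N; rewrite expr1.
have rp : 0 < r by rewrite lt_def rn0 r0.
set s := r^-1 - 1.
have sp : 0 < s by rewrite /s subr_gt0 invf_gt1.
set M := e^-1 / s.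
have M0 : 0 <= M by rewrite /M divr_ge0 // ?invr_ge0 ltW.
exists (Num.Def.archi_bound M).
have hb := archi_boundP M0; set n := Num.Def.archi_bound M in hb *.
have hB := @bernoulli s n (ltW sp).
have : r^-1 = 1 + s by rewrite /s addrC subrK.
move=> hr; rewrite -hr in hB.
have hns : e^-1 < n%:R * s.
  by rewrite -ltr_pdivrMr // -/M.
rewrite exprVn in hB.
have hpos : 0 < r ^+ n by apply: exprn_gt0.
have : e^-1 < (r ^+ n)^-1 by lra.
by rewrite ltf_pV2 // posrE.
Qed.

Context {A : cstar_algebra R}.
Local Notation N := (@cs_norm R A).
Local Notation st := (@cs_star R A).

Definition cvgA (u : nat -> A) (l : A) :=
  forall e : R, 0 < e -> exists M : nat, forall n, (M <= n)%N -> N (u n - l) < e.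

Lemma cvg_uniq u l l' : cvgA u l -> cvgA u l' -> l = l'.
Proof.
move=> h h'; apply/eqP; rewrite -subr_eq0; apply/eqP; apply/N_eq0.
apply/eqP; rewrite eq_le cs_norm_ge0 andbT; apply/ler_addgt0Pr => e e0.
have e2 : 0 < e / 2 by lra.
have [M1 H1] := h _ e2; have [M2 H2] := h' _ e2.
have := H1 (maxn M1 M2) (leq_maxl _ _); have := H2 (maxn M1 M2) (leq_maxr _ _).
have := Ntri3 l (u (maxn M1 M2)) l'; rewrite (NB l (u _)); lra.
Qed.

Lemma cvg_ext u v l : (forall n, u n = v n) -> cvgA u l -> cvgA v l.
Proof. by move=> E h e /h [M HM]; exists M => n /HM; rewrite E. Qed.

Lemma cvg_shift u l : cvgA u l -> cvgA (fun n => u n.+1) l.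
Proof. by move=> h e /h [M HM]; exists M => n hn; apply: HM; apply: leqW. Qed.

Lemma cvg_cst l : cvgA (fun _ => l) l.
Proof. by move=> e e0; exists 0%N => n _; rewrite subrr N0. Qed.

Lemma cvg_st u l : cvgA u l -> cvgA (fun n => st (u n)) (st l).
Proof. by move=> h e /h [M HM]; exists M => n /HM; rewrite -stB Nst. Qed.

Lemma cvg_add u v a b : cvgA u a -> cvgA v b -> cvgA (fun n => u n + v n) (a + b).
Proof.
move=> hu hv e e0; have e2 : 0 < e / 2 by lra.
have [M1 H1] := hu _ e2; have [M2 H2] := hv _ e2.
exists (maxn M1 M2) => n hn.
have := H1 n (leq_trans (leq_maxl _ _) hn); have := H2 n (leq_trans (leq_maxr _ _) hn).
have -> : u n + v n - (a + b) = (u n - a) + (v n - b).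
  by rewrite opprD addrACA.
have := cs_norm_triangle (u n - a) (v n - b); lra.
Qed.

Lemma cvg_scaleR (c : R) u a : cvgA u a -> cvgA (fun n => (c%:C)%C *: u n) ((c%:C)%C *: a).
Proof.
move=> hu e e0.
have c1 : 0 < `|c| + 1 by have := normr_ge0 c; lra.
have [M HM] := hu (e / (`|c| + 1)) (divr_gt0 e0 c1).
exists M => n /HM hn; rewrite -scalerBr N_scaleR.
have hc : `|c| * N (u n - a) <= (`|c| + 1) * N (u n - a).
  by apply: ler_wpM2r; [apply: cs_norm_ge0| lra].
apply: (le_lt_trans hc); rewrite mulrC -ltr_pdivlMr //.
Qed.

Lemma cvg_bounded u a : cvgA u a -> exists M, forall n, (M <= n)%N -> N (u n) <= N a + 1.
Proof.
move=> hu; have [M HM] := hu 1 ltr01; exists M => n /HM h.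
have := cs_norm_triangle (u n - a) a; rewrite subrK; lra.
Qed.

Lemma cvg_mul u v a b : cvgA u a -> cvgA v b -> cvgA (fun n => u n * v n) (a * b).
Proof.
move=> hu hv e e0.
set K := N a + 1 + N b + 1.
have K0 : 0 < K by rewrite /K; have := cs_norm_ge0 a; have := cs_norm_ge0 b; lra.
have [M0 H0] := cvg_bounded hu.
have [M1 H1] := hu (e / K) (divr_gt0 e0 K0).
have [M2 H2] := hv (e / K) (divr_gt0 e0 K0).
exists (maxn M0 (maxn M1 M2)) => n hn.
have hn0 := leq_trans (leq_maxl _ _) hn.
have hn1 := leq_trans (leq_maxl _ _) (leq_trans (leq_maxr _ _) hn).
have hn2 := leq_trans (leq_maxr _ _) (leq_trans (leq_maxr _ _) hn).
have A0 := H0 n hn0; have A1 := H1 n hn1; have A2 := H2 n hn2.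
apply: le_lt_trans (N_mulB _ _ _ _) _.
have p1 := cs_norm_ge0 (u n); have p2 := cs_norm_ge0 (v n - b).
have p3 := cs_norm_ge0 (u n - a); have p4 := cs_norm_ge0 b.
have p5 := cs_norm_ge0 a.
have hK : e / K * K = e by rewrite divfK // gt_eqF.
set d := e / K in A1 A2 hK.
have hd : 0 < d by rewrite /d divr_gt0.
have t1 : N (u n) * N (v n - b) <= (N a + 1) * d by apply: ler_pM => //; lra.
have t2 : N (u n - a) * N b <= d * N b by apply: ler_pM => //; lra.
rewrite /K in hK; nra.
Qed.

Lemma cvg_mull w u a : cvgA u a -> cvgA (fun n => w * u n) (w * a).
Proof. by move=> h; apply: cvg_mul h; apply: cvg_cst. Qed.

Lemma cvg_mulr w u a : cvgA u a -> cvgA (fun n => u n * w) (a * w).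
Proof. by move=> h; apply: cvg_mul (cvg_cst w). Qed.

Lemma cauchy_cvg u :
  (forall e : R, 0 < e -> exists M : nat, forall m n : nat,
          (M <= m)%N -> (M <= n)%N -> N (u m - u n) < e) -> exists l, cvgA u l.
Proof. by move/cs_complete. Qed.

End Conv.
Section Sqrt.
Context {R : realType} {A : cstar_algebra R}.
Local Notation N := (@cs_norm R A).
Local Notation st := (@cs_star R A).

Variables (h : A) (rho : R).
Hypotheses (hsa : st h = h) (hN : N h <= rho) (hr1 : rho < 1).

Local Notation half := (((1/2 : R)%:C)%C : R[i]).

Fixpoint zs (k : nat) : A := if k is k'.+1 then half *: (h + zs k' * zs k') else 0.

Local Notation r := ((1 + rho) / 2 : R).

Lemma rho0 : 0 <= rho.
Proof. by apply: le_trans hN; apply: cs_norm_ge0. Qed.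

Lemma zs_bound k : N (zs k) <= r.
Proof.
have r0 := rho0.
elim: k => [|k IH] /=; first by rewrite N0; lra.
rewrite N_scaleR.
have := cs_norm_triangle h (zs k * zs k); have := cs_norm_mul (zs k) (zs k).
have := cs_norm_ge0 (zs k); have := cs_norm_ge0 (h + zs k * zs k).
have -> : `|1 / 2 : R| = 1/2 by rewrite ger0_norm //; lra.
have hzz : N (zs k) * N (zs k) <= r * r by apply: ler_pM => //; apply: cs_norm_ge0.
have hr : rho + r * r <= 2 * r.
  have H : 0 <= (1 - rho) * (rho + 3).
    apply: mulr_ge0; move: hr1 r0; lra.
  have E : 2 * r - (rho + r * r) = (1 - rho) * (rho + 3) / 4 by field.
  lra.
have hN' := hN.
lra.
Qed.

Lemma zs_contr k : N (zs k.+2 - zs k.+1) <= r * N (zs k.+1 - zs k).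
Proof.
have hN' := hN; have hr1' := hr1; have r0' := rho0.
rewrite [zs k.+2]/= [zs k.+1]/= -[X in _ - X]/(zs k.+1) -scalerBr N_scaleR.
have -> : h + zs k.+1 * zs k.+1 - (h + zs k * zs k) = zs k.+1 * zs k.+1 - zs k * zs k.
  by rewrite opprD addrACA subrr add0r.
have := N_mulB (zs k.+1) (zs k.+1) (zs k) (zs k).
have := zs_bound k; have := zs_bound k.+1.
have := cs_norm_ge0 (zs k.+1 - zs k); have := cs_norm_ge0 (zs k.+1 * zs k.+1 - zs k * zs k).
have := cs_norm_ge0 (zs k.+1); have := cs_norm_ge0 (zs k).
have -> : `|1 / 2 : R| = 1/2 by rewrite ger0_norm //; lra.
move=> n1 n2 n3 n4 b1 b2 hm.
have t : N (zs k.+1) * N (zs k.+1 - zs k) + N (zs k.+1 - zs k) * N (zs k)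
   <= (r + r) * N (zs k.+1 - zs k).
  rewrite mulrDl [_ * N (zs k)]mulrC; apply: lerD; apply: ler_wpM2r => //.
lra.
Qed.

Lemma zs_step k : N (zs k.+1 - zs k) <= r ^+ k.
Proof.
have hN' := hN; have hr1' := hr1; have r0' := rho0.
have r0 : 0 <= r by have := rho0; lra.
elim: k => [|k IH].
  rewrite /= subr0 expr0 N_scaleR mulr0 addr0.
  have -> : `|1 / 2 : R| = 1/2 by rewrite ger0_norm //; lra.
  have := cs_norm_ge0 h; lra.
apply: le_trans (zs_contr k) _; rewrite exprS; apply: ler_wpM2l => //.
Qed.

Lemma zs_tele n j : N (zs (n + j) - zs n) <= (r ^+ n - r ^+ (n + j)) / (1 - r).
Proof.
have hN' := hN; have hr1' := hr1; have r0' := rho0.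
have r1 : r < 1 by lra.
have r0 : 0 <= r by have := rho0; lra.
elim: j => [|j IH]; first by rewrite addn0 !subrr N0 mul0r.
apply: le_trans (Ntri3 _ (zs (n + j)) _) _.
rewrite addnS; have := zs_step (n + j); move=> H.
have -> : (r ^+ n - r ^+ (n + j).+1) / (1 - r) =
   r ^+ (n + j) + (r ^+ n - r ^+ (n + j)) / (1 - r).
  rewrite exprS; field; lra.
by apply: lerD.
Qed.

Lemma zs_cauchy : exists l, cvgA zs l.
Proof.
have hN' := hN; have hr1' := hr1; have r0' := rho0.
have r1 : r < 1 by lra.
have r0 : 0 <= r by have := rho0; lra.
apply: cauchy_cvg => e e0.
have e' : 0 < e * (1 - r) / 2 by apply: divr_gt0 => //; apply: mulr_gt0; lra.
have [M HM] := geo_small r0 r1 e'.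
exists M => m n hm hn.
have key : forall p, (M <= p)%N -> N (zs p - zs M) <= r ^+ M / (1 - r).
  move=> p hp; rewrite -(subnKC hp); apply: le_trans (zs_tele _ _) _.
  apply: ler_wpM2r; first by rewrite invr_ge0; lra.
  by rewrite lerBlDr lerDl exprn_ge0.
apply: le_lt_trans (Ntri3 _ (zs M) _) _.
have := key m hm; have := key n hn; rewrite (NB (zs M)).
have hq : r ^+ M / (1 - r) < e / 2.
  by rewrite ltr_pdivrMr; [lra|lra].
lra.
Qed.

Lemma zs_sa k : st (zs k) = zs k.
Proof.
elim: k => [|k IH] /=; first by rewrite st0.
by rewrite stR cs_star_add cs_star_mul IH hsa.
Qed.

Lemma zs_comm w k : w * h = h * w -> w * zs k = zs k * w.
Proof.
move=> hw; elim: k => [|k IH] /=; first by rewrite mulr0 mul0r.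
rewrite -scalerAr -scalerAl mulrDr mulrDl hw; congr (_ *: (_ + _)).
by rewrite mulrA IH -!mulrA IH.
Qed.

Lemma sqrt_ex : exists y : A, [/\ st y = y, y * y = 1 - h &
   forall w, w * h = h * w -> w * y = y * w].
Proof.
have [l hl] := zs_cauchy.
have Hl : l = half *: (h + l * l).
  apply: (cvg_uniq (cvg_shift hl)).
  apply: cvg_scaleR; apply: cvg_add; first exact: cvg_cst.
  exact: cvg_mul.
exists (1 - l); split.
- rewrite stB st1; congr (_ - _).
  apply: (cvg_uniq (cvg_st hl)); apply: cvg_ext hl => n; by rewrite zs_sa.
- have h2 : l + l = h + l * l.
    have -> : h + l * l = ((2:R)%:C)%C *: l.
      rewrite [in RHS]Hl scalerA -rmorphM.
      have -> : (2 : R) * (1/2) = 1 by lra.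
      by rewrite rmorph1 scale1r.
    by rewrite rmorph_nat scaler_nat mulr2n.
  have h3 : l * l = l + l - h by rewrite h2 addrC addKr.
  rewrite mulrBl !mulrBr !mul1r !mulr1 h3.
  by rewrite opprB [l + l - h - l]addrAC addrK addrA subrK.
- move=> w hw; rewrite mulrBr mulrBl mulr1 mul1r; congr (_ - _).
  apply: (cvg_uniq (cvg_mull w hl)); apply: cvg_ext (cvg_mulr w hl) => n.
  by rewrite zs_comm.
Qed.

End Sqrt.
Section Tau.
Context {R : realType} {A : cstar_algebra R}.
Local Notation N := (@cs_norm R A).
Local Notation st := (@cs_star R A).

Lemma ge0c (z : R[i]) : 0 <= z -> exists p : R, z = (p%:C)%C /\ 0 <= p.
Proof.
case: z => a b; rewrite lecE /= => /andP [/eqP hb ha].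
by exists a; split => //; rewrite hb.
Qed.

Lemma rcD (a b : R) : ((a + b)%:C)%C = (a%:C)%C + (b%:C)%C.
Proof. by rewrite rmorphD. Qed.
Lemma rcB (a b : R) : ((a - b)%:C)%C = (a%:C)%C - (b%:C)%C.
Proof. by rewrite rmorphB. Qed.
Lemma rcN (a : R) : ((- a)%:C)%C = - (a%:C)%C.
Proof. by rewrite rmorphN. Qed.
Lemma rcM (a b : R) : ((a * b)%:C)%C = (a%:C)%C * (b%:C)%C.
Proof. by rewrite rmorphM. Qed.
Lemma rc1 : ((1 : R)%:C)%C = 1.
Proof. by rewrite rmorph1. Qed.
Lemma rc0 : ((0 : R)%:C)%C = 0.
Proof. by rewrite rmorph0. Qed.
Lemma rcV (a : R) : ((a^-1)%:C)%C = ((a%:C)%C)^-1.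
Proof. by rewrite fmorphV. Qed.
Lemma rc_nat (n : nat) : ((n%:R : R)%:C)%C = n%:R.
Proof. by rewrite rmorph_nat. Qed.
Lemma rc_sum (I : Type) (s : seq I) (F : I -> R) :
  ((\sum_(i <- s) F i)%:C)%C = \sum_(i <- s) ((F i)%:C)%C.
Proof. by rewrite rmorph_sum. Qed.

Variable tau : A -> R[i].
Hypothesis ht : tracial_state tau.

Lemma tauD x y : tau (x + y) = tau x + tau y.
Proof. by case: ht. Qed.

Lemma tauZ c x : tau (c *: x) = c * tau x.
Proof. by case: ht. Qed.

Lemma tau_pos x : 0 <= tau (st x * x).
Proof. by case: ht. Qed.

Lemma tau1 : tau 1 = 1.
Proof. by case: ht. Qed.

Lemma tau0 : tau 0 = 0.
Proof. by have := tauZ 0 0; rewrite scale0r mul0r. Qed.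

Lemma tauN x : tau (- x) = - tau x.
Proof. by rewrite -scaleN1r tauZ mulN1r. Qed.

Lemma tauB x y : tau (x - y) = tau x - tau y.
Proof. by rewrite tauD tauN. Qed.

Lemma tau_sum (I : Type) (s : seq I) (F : I -> A) :
  tau (\sum_(i <- s) F i) = \sum_(i <- s) tau (F i).
Proof.
elim: s => [|a s IH]; first by rewrite !big_nil tau0.
by rewrite !big_cons tauD IH.
Qed.

Lemma tau_sc r : tau (sc r) = (r%:C)%C.
Proof. by rewrite /sc tauZ tau1 mulr1. Qed.

Lemma tau_sq y : st y = y -> exists p : R, tau (y * y) = (p%:C)%C /\ 0 <= p.
Proof. by move=> hy; apply: ge0c; have := tau_pos y; rewrite hy. Qed.

Lemma tau_sa_unit h : st h = h -> N h <= 1/2 ->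
  exists a : R, tau h = (a%:C)%C /\ `|a| <= 1.
Proof.
move=> hs hn.
have hn' : N (- h) <= 1/2 by rewrite NN.
have hs' : st (- h) = - h by rewrite stN hs.
have h12 : (1/2 : R) < 1 by lra.
have [y [sy yy _]] := sqrt_ex hs hn h12.
have [y' [sy' yy' _]] := sqrt_ex hs' hn' h12.
have [p [hp p0]] := tau_sq sy; have [q [hq q0]] := tau_sq sy'.
rewrite yy tauB tau1 in hp; rewrite yy' opprK tauD tau1 in hq.
have e1 : tau h = ((1 - p)%:C)%C by rewrite rcB rc1 -hp opprB addrC subrK.
have e2 : tau h = ((q - 1)%:C)%C by rewrite rcB rc1 -hq addrC addKr.
exists (1 - p); split => //.
have := e1; rewrite e2 => /rc_inj e.
rewrite ler_norml; lra.
Qed.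

Lemma tau_sa h : st h = h -> exists a : R, tau h = (a%:C)%C /\ `|a| <= 2 * N h.
Proof.
move=> hs.
have [/N_eq0 ->|nz] := eqVneq (N h) 0.
  by exists 0; rewrite tau0 rc0 normr0 N0 mulr0.
have np : 0 < N h by rewrite lt_def nz cs_norm_ge0.
set c := 2 * N h.
have cp : 0 < c by rewrite /c mulr_gt0.
set h' := ((c^-1)%:C)%C *: h.
have hs' : st h' = h' by rewrite /h' stR hs.
have hn' : N h' <= 1/2.
  rewrite /h' N_scaleR ger0_norm; last by rewrite invr_ge0 ltW.
  have E : c^-1 * N h = 1/2 by rewrite /c invfM mulrAC mulfK //; lra.
  rewrite E; lra.
have [a [ha a1]] := tau_sa_unit hs' hn'.
exists (c * a); split.
  have -> : h = ((c)%:C)%C *: h' by rewrite /h' scalerA -rcM mulfV ?gt_eqF // rc1 scale1r.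
  by rewrite tauZ ha rcM.
rewrite normrM (gtr0_norm cp) -{2}[c]mulr1; apply: ler_wpM2l => //; exact: ltW.
Qed.

End Tau.
Section Cone.
Context {R : realType} {A : cstar_algebra R}.
Local Notation N := (@cs_norm R A).
Local Notation st := (@cs_star R A).
Variable f : A.
Hypothesis fsa : st f = f.

Definition Bc (x : A) := forall w, w * f = f * w -> x * w = w * x.

Lemma Bc_f : Bc f.
Proof. by move=> w ->. Qed.
Lemma Bc_1 : Bc 1.
Proof. by move=> w _; rewrite mul1r mulr1. Qed.
Lemma Bc_0 : Bc 0.
Proof. by move=> w _; rewrite mul0r mulr0. Qed.
Lemma Bc_add x y : Bc x -> Bc y -> Bc (x + y).
Proof. by move=> hx hy w hw; rewrite mulrDl mulrDr hx ?hy. Qed.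
Lemma Bc_opp x : Bc x -> Bc (- x).
Proof. by move=> hx w hw; rewrite mulNr mulrN hx. Qed.
Lemma Bc_sub x y : Bc x -> Bc y -> Bc (x - y).
Proof. by move=> hx hy; apply: Bc_add hx (Bc_opp hy). Qed.
Lemma Bc_mul x y : Bc x -> Bc y -> Bc (x * y).
Proof. by move=> hx hy w hw; rewrite -mulrA hy // mulrA hx // mulrA. Qed.
Lemma Bc_scale c x : Bc x -> Bc (c *: x).
Proof. by move=> hx w hw; rewrite -scalerAl -scalerAr hx. Qed.
Lemma Bc_sc r : Bc (sc r).
Proof. exact: Bc_scale Bc_1. Qed.
Lemma Bc_exp x n : Bc x -> Bc (x ^+ n).
Proof.
move=> hx; elim: n => [|n IH]; first by rewrite expr0; exact: Bc_1.
by rewrite exprS; apply: Bc_mul.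
Qed.
Lemma Bc_comm x y : Bc x -> Bc y -> x * y = y * x.
Proof. by move=> hx hy; apply: hx; apply: hy; apply: Bc_f. Qed.
Lemma Bc_sum (I : Type) (s : seq I) (F : I -> A) :
  (forall i, Bc (F i)) -> Bc (\sum_(i <- s) F i).
Proof.
move=> hF; elim: s => [|a s IH]; first by rewrite big_nil; exact: Bc_0.
by rewrite big_cons; apply: Bc_add.
Qed.

Lemma Bc_sqrt h rho : Bc h -> st h = h -> N h <= rho -> rho < 1 ->
  exists y, [/\ Bc y, st y = y & y * y = 1 - h].
Proof.
move=> hb hs hn hr; have [y [sy yy hc]] := sqrt_ex hs hn hr.
exists y; split => // w hw; apply/esym/hc; apply/esym; exact: hb.
Qed.

Definition Pc (x : A) := exists s : seq A,
  (forall y, y \in s -> Bc y /\ st y = y) /\ x = \sum_(y <- s) y * y.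

Lemma Pc_sq y : Bc y -> st y = y -> Pc (y * y).
Proof.
move=> hb hs; exists [:: y]; split; last by rewrite big_seq1.
by move=> z; rewrite inE => /eqP ->.
Qed.

Lemma Pc_add x y : Pc x -> Pc y -> Pc (x + y).
Proof.
move=> [s [hs ->]] [t [ht ->]]; exists (s ++ t); split; last by rewrite big_cat.
by move=> z; rewrite mem_cat => /orP [/hs|/ht].
Qed.

Lemma Pc_B x : Pc x -> Bc x.
Proof.
move=> [s [hs ->]]; rewrite big_seq; apply: big_ind => [|u v|y hy].
- exact: Bc_0.
- exact: Bc_add.
- by have [hb _] := hs y hy; apply: Bc_mul.
Qed.

Lemma Pc_sa x : Pc x -> st x = x.
Proof.
move=> [s [hs ->]]; rewrite big_seq; apply: (big_ind (fun x => st x = x)) => [|u v|y hy].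
- exact: st0.
- by move=> hu hv; rewrite cs_star_add hu hv.
- by have [_ hy'] := hs y hy; rewrite cs_star_mul hy'.
Qed.

Lemma Pc_sqmul a y : Bc a -> st a = a -> Pc y -> Pc (a * a * y).
Proof.
move=> ha sa [t [ht ->]]; exists [seq a * b | b <- t]; split.
  move=> z /mapP [b hb ->]; have [hbb sb] := ht b hb; split; first exact: Bc_mul.
  by rewrite cs_star_mul sa sb (Bc_comm hbb ha).
rewrite big_map mulr_sumr big_seq [RHS]big_seq; apply: eq_bigr => b hb.
have [hbb _] := ht b hb; have E : b * a = a * b by apply: Bc_comm.
by rewrite !mulrA -(mulrA a b a) E !mulrA.
Qed.

Lemma Pc_mul x y : Pc x -> Pc y -> Pc (x * y).
Proof.
move=> [s [hs ->]] hy; elim: s hs => [|a s IH] hs.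
  by rewrite big_nil mul0r; exists [::]; split => //; rewrite big_nil.
rewrite big_cons mulrDl; have [ha sa] := hs a (mem_head _ _).
apply: Pc_add; first exact: Pc_sqmul.
by apply: IH => z hz; apply: hs; rewrite inE hz orbT.
Qed.

Lemma Pc_1 : Pc 1.
Proof. by rewrite -(mulr1 1); apply: Pc_sq; [exact: Bc_1 | exact: st1]. Qed.

Lemma Pc_scale (c : R) x : 0 <= c -> Pc x -> Pc ((c%:C)%C *: x).
Proof.
move=> c0 [s [hs ->]]; exists [seq ((Num.sqrt c)%:C)%C *: y | y <- s]; split.
  move=> z /mapP [y hy ->]; have [hb sy] := hs y hy; split; first exact: Bc_scale.
  by rewrite stR sy.
rewrite big_map scaler_sumr; apply: eq_bigr => y _.
by rewrite -scalerAl -scalerAr scalerA -rcM -[Num.sqrt c * _]expr2 sqr_sqrtr.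
Qed.

Lemma Pc_sc (c : R) : 0 <= c -> Pc (sc c).
Proof. by move=> c0; apply: Pc_scale c0 Pc_1. Qed.

Definition Pos (x : A) := [/\ Bc x, st x = x &
  forall e : R, 0 < e -> exists x', Pc x' /\ N (x - x') < e].

Lemma Pos_Pc x : Pc x -> Pos x.
Proof.
move=> hx; split; [exact: Pc_B | exact: Pc_sa |].
by move=> e e0; exists x; split => //; rewrite subrr N0.
Qed.

Lemma Pos_add x y : Pos x -> Pos y -> Pos (x + y).
Proof.
move=> [bx sx hx] [by_ sy hy]; split; [exact: Bc_add | by rewrite cs_star_add sx sy |].
move=> e e0; have e2 : 0 < e / 2 by lra.
have [x' [px' nx]] := hx _ e2; have [y' [py' ny]] := hy _ e2.
exists (x' + y'); split; first exact: Pc_add.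
have -> : x + y - (x' + y') = (x - x') + (y - y') by rewrite opprD addrACA.
have := cs_norm_triangle (x - x') (y - y'); lra.
Qed.

Lemma Pos_mul x y : Pos x -> Pos y -> Pos (x * y).
Proof.
move=> [bx sx hx] [by_ sy hy]; split; first exact: Bc_mul.
  by rewrite cs_star_mul sx sy (Bc_comm by_ bx).
move=> e e0.
have nx0 := cs_norm_ge0 x; have ny0 := cs_norm_ge0 y.
set K := N x + N y + e + 1.
have K0 : 0 < K by rewrite /K; lra.
set d := e / K.
have d0 : 0 < d by rewrite /d divr_gt0.
have dK : d * K = e by rewrite /d divfK // gt_eqF.
have d1 : d < 1.
  have : d * K < 1 * K by rewrite dK mul1r /K; lra.
  by rewrite ltr_pM2r.
have [x' [px' nx]] := hx _ d0; have [y' [py' ny]] := hy _ d0.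
exists (x' * y'); split; first exact: Pc_mul.
apply: le_lt_trans (N_mulB _ _ _ _) _.
have ny' : N y' <= N y + 1.
  have := Ntri3 y' y 0; rewrite !subr0 (NB y') => h; lra.
have t1 : N x * N (y - y') <= N x * d by apply: ler_wpM2l => //; exact: ltW.
have t2 : N (x - x') * N y' <= d * (N y + 1).
  by apply: ler_pM => //; [exact: cs_norm_ge0 | exact: cs_norm_ge0 | exact: ltW].
rewrite /K in dK; nra.
Qed.

Lemma Pos_sc (c : R) : 0 <= c -> Pos (sc c).
Proof. by move=> c0; apply: Pos_Pc; apply: Pc_sc. Qed.

Lemma Pos_sq y : Bc y -> st y = y -> Pos (y * y).
Proof. by move=> hb hs; apply: Pos_Pc; apply: Pc_sq. Qed.

Lemma Pos_shift h (a : R) : Bc h -> st h = h -> N h <= a -> Pos (sc a - h).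
Proof.
move=> hb hs hn; have a0 : 0 <= a by apply: le_trans hn; exact: cs_norm_ge0.
split.
- by apply: Bc_sub => //; exact: Bc_sc.
- by rewrite stB stsc hs.
move=> e e0.
set a' := a + e / 2.
have a'0 : 0 < a' by rewrite /a'; lra.
set h' := (((a'^-1)%:C)%C) *: h.
have hb' : Bc h' by apply: Bc_scale.
have hs' : st h' = h' by rewrite /h' stR hs.
have hn' : N h' <= a / a'.
  rewrite /h' N_scaleR ger0_norm; last by rewrite invr_ge0 ltW.
  by rewrite mulrC ler_wpM2r // invr_ge0 ltW.
have hr : a / a' < 1 by rewrite ltr_pdivrMr // mul1r /a'; lra.
have [y [by' sy yy]] := Bc_sqrt hb' hs' hn' hr.
exists (sc a' - h); split.
  have -> : sc a' - h = ((a'%:C)%C) *: (y * y).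
    rewrite yy scalerBr /h' scalerA -rcM mulfV ?gt_eqF // rc1 scale1r //.
  by apply: Pc_scale; [exact: ltW | exact: Pc_sq].
rewrite opprB addrA subrK /sc -scalerBl -rcB.
apply: le_lt_trans (N_sc _) _; rewrite /a' -normrN ger0_norm; lra.
Qed.

Lemma Pos_shift' h (a : R) : Bc h -> st h = h -> N h <= a -> Pos (sc a + h).
Proof.
move=> hb hs hn; rewrite -(opprK h); apply: Pos_shift.
- exact: Bc_opp.
- by rewrite stN hs.
- by rewrite NN.
Qed.

End Cone.
Section TauPos.
Context {R : realType} {A : cstar_algebra R}.
Local Notation N := (@cs_norm R A).
Local Notation st := (@cs_star R A).
Variable f : A.
Variable tau : A -> R[i].
Hypothesis ht : tracial_state tau.

Lemma tau_Pc x : Pc f x -> exists p : R, tau x = (p%:C)%C /\ 0 <= p.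
Proof.
move=> [s [hs ->]]; elim: s hs => [|a s IH] hs.
  by exists 0; rewrite big_nil (tau0 ht) rc0.
rewrite big_cons (tauD ht).
have [_ sa] := hs a (mem_head _ _).
have [p [hp p0]] := tau_sq ht sa.
have [q [hq q0]] : exists q : R, tau (\sum_(y <- s) y * y) = (q%:C)%C /\ 0 <= q.
  by apply: IH => z hz; apply: hs; rewrite inE hz orbT.
by exists (p + q); rewrite hp hq rcD; split => //; apply: addr_ge0.
Qed.

Lemma tau_Pos x : Pos f x -> exists p : R, tau x = (p%:C)%C /\ 0 <= p.
Proof.
move=> [bx sx hx]; have [a [ha _]] := tau_sa ht sx.
exists a; split => //.
apply/ler_addgt0Pr => e e0.
have e4 : 0 < e / 4 by lra.
have [x' [px' nx]] := hx _ e4.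
have [p [hp p0]] := tau_Pc px'.
have sd : st (x - x') = x - x' by rewrite stB sx (Pc_sa px').
have [b [hb bb]] := tau_sa ht sd.
rewrite (tauB ht) ha hp -rcB in hb; move/rc_inj: hb => hb.
have := ler_norml b (2 * N (x - x')); rewrite bb => /esym /andP [h1 _].
have : a = p + b by rewrite -hb addrC subrK.
lra.
Qed.

End TauPos.
Section Peval.
Context {R : realType} {A : cstar_algebra R}.
Local Notation N := (@cs_norm R A).
Local Notation st := (@cs_star R A).
Local Notation pv := (@peval R A).

Lemma peval_wide n (p : {poly R}) (x : A) : (size p <= n)%N ->
  pv p x = \sum_(k < n) ((p`_k)%:C)%C *: x ^+ k.
Proof.
move=> hn; rewrite /peval (big_ord_widen _ (fun k => ((p`_k)%:C)%C *: x ^+ k) hn).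
rewrite big_mkcond; apply: eq_bigr => i _; case: ifP => // /negbT.
by rewrite -leqNgt => h; rewrite nth_default // rc0 scale0r.
Qed.

Lemma peval0 x : pv 0 x = 0.
Proof. by rewrite /peval size_poly0 big_ord0. Qed.

Lemma pevalD p q x : pv (p + q) x = pv p x + pv q x.
Proof.
rewrite (peval_wide _ (size_polyD p q)) (peval_wide _ (leq_maxl (size p) (size q))).
rewrite (peval_wide _ (leq_maxr (size p) (size q))) -big_split; apply: eq_bigr => i _.
by rewrite coefD rcD scalerDl.
Qed.

Lemma pevalZ c p x : pv (c *: p) x = (c%:C)%C *: pv p x.
Proof.
rewrite (peval_wide _ (size_scale_leq c p)) /peval scaler_sumr.
by apply: eq_bigr => i _; rewrite coefZ rcM scalerA.
Qed.

Lemma pevalN p x : pv (- p) x = - pv p x.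
Proof. by rewrite -scaleN1r pevalZ rcN rc1 scaleN1r. Qed.

Lemma pevalB p q x : pv (p - q) x = pv p x - pv q x.
Proof. by rewrite pevalD pevalN. Qed.

Lemma pevalC c x : pv c%:P x = sc c.
Proof.
rewrite (peval_wide _ (size_polyC_leq1 c)) big_ord1 coefC /= expr0 //.
Qed.

Lemma peval_sum (I : Type) (s : seq I) (F : I -> {poly R}) x :
  pv (\sum_(i <- s) F i) x = \sum_(i <- s) pv (F i) x.
Proof.
elim: s => [|a s IH]; first by rewrite !big_nil peval0.
by rewrite !big_cons pevalD IH.
Qed.

Lemma pevalMX p x : pv (p * 'X) x = pv p x * x.
Proof.
have hs : (size (p * 'X)%R <= (size p).+1)%N.
  by apply: leq_trans (size_polyMleq _ _) _; rewrite size_polyX addn2.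
rewrite (peval_wide _ hs) big_ord_recl coefMX eqxx rc0 scale0r add0r.
rewrite /peval mulr_suml; apply: eq_bigr => i _.
by rewrite coefMX /= -scalerAl exprSr.
Qed.

Lemma peval_comm p x : pv p x * x = x * pv p x.
Proof.
rewrite /peval mulr_suml mulr_sumr; apply: eq_bigr => i _.
by rewrite -scalerAl -scalerAr -exprSr exprS.
Qed.

Lemma pevalM p q x : pv (p * q) x = pv p x * pv q x.
Proof.
elim/poly_ind: p => [|p c IH]; first by rewrite mul0r !peval0 mul0r.
have -> : (p * 'X + c%:P) * q = (p * q) * 'X + c *: q.
  by rewrite mulrDl mulrAC mul_polyC.
rewrite pevalD pevalMX pevalZ IH pevalD pevalMX pevalC mulrDl.
by rewrite -mulrA peval_comm mulrA /sc -scalerAl mul1r.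
Qed.

Lemma pevalX x : pv 'X x = x.
Proof.
have -> : 'X = 1%:P * 'X :> {poly R} by rewrite mul1r.
by rewrite pevalMX pevalC /sc rc1 scale1r mul1r.
Qed.

Lemma peval_comp p q x : pv (p \Po q) x = pv p (pv q x).
Proof.
elim/poly_ind: p => [|p c IH]; first by rewrite comp_poly0 !peval0.
rewrite comp_polyD comp_polyM comp_polyX comp_polyC pevalD pevalM IH pevalC.
by rewrite pevalD pevalMX pevalC.
Qed.

Lemma peval_B f p x : Bc f x -> Bc f (pv p x).
Proof.
move=> hx; rewrite /peval; apply: Bc_sum => i; apply: Bc_scale; exact: Bc_exp.
Qed.

Lemma peval_sa p x : st x = x -> st (pv p x) = pv p x.
Proof.
move=> hx; elim/poly_ind: p => [|p c IH]; first by rewrite peval0 st0.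
by rewrite pevalD pevalMX pevalC cs_star_add cs_star_mul hx IH stsc peval_comm.
Qed.

End Peval.
Section CRoot.
Context {R : realType}.
Local Notation rc := (real_complex R).

Lemma cE (x y : R) : ((x%:C)%C + 'i%C * (y%:C)%C) = (x +i* y)%C.
Proof. by rewrite [RHS]complexE. Qed.

Lemma no_real_root_factor (q : {poly R}) : (forall r, ~~ root q r) -> (1 < size q)%N ->
  exists (a b : R) (d : {poly R}), b != 0 /\ q = d * (('X - a%:P)^+2 + (b^+2)%:P).
Proof.
move=> nr sq.
set qc := map_poly rc q.
have sqc : size qc = size q by rewrite size_map_poly.
have [z rz] : exists z, root qc z by apply/closed_rootP; rewrite sqc; case: (size q) sq => [|[|]].
set a := complex.Re z; set b := complex.Im z.
have zE : z = (a%:C)%C + 'i%C * (b%:C)%C by rewrite /a /b -complexE.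
have bn0 : b != 0.
  apply/negP => /eqP b0; move: rz; rewrite zE b0 rc0 mulr0 addr0 /root.
  rewrite (horner_map rc q a) => /eqP h.
  have qa : q.[a] = 0 by apply: rc_inj; rewrite rc0 -h.
  by move: (nr a); rewrite /root qa eqxx.
set m : {poly R} := ('X - a%:P)^+2 + (b^+2)%:P.
have mc0 : (map_poly rc m).[z] = 0.
  rewrite rmorphD rmorphXn rmorphB /= map_polyX !map_polyC !hornerE /=.
  rewrite zE addrAC subrr add0r exprMn sqr_i.
  have -> : rc (b ^+ 2) = (b%:C)%C ^+ 2 by rewrite rmorphXn.
  by rewrite mulN1r addNr.
have sm : size m = 3%N.
  rewrite /m size_polyDl size_exp_XsubC //.
  by apply: leq_ltn_trans (size_polyC_leq1 _) _.
have m0 : m != 0 by rewrite -size_poly_eq0 sm.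
set d := q %/ m; set rem := q %% m.
have qE : q = d * m + rem by apply: divp_eq.
have srem : (size rem <= 2)%N by rewrite -ltnS -sm ltn_modp.
have remz : (map_poly rc rem).[z] = 0.
  move: rz; rewrite /root /qc qE rmorphD rmorphM /= hornerD hornerM mc0 mulr0 add0r.
  by move/eqP.
rewrite (horner_coef_wide _ (leq_trans (eq_leq (size_map_poly _ _)) srem)) in remz.
rewrite !big_ord_recl big_ord0 addr0 !coef_map /= expr0 mulr1 expr1 in remz.
set r0 := rem`_0 in remz; set r1 := rem`_(bump 0 0) in remz.
have remz' : ((r0 + r1 * a)%:C)%C + 'i%C * ((r1 * b)%:C)%C = 0.
  rewrite -remz zE rcD !rcM; rewrite -[X in _ = X]/(rc r0 + rc r1 * (rc a + 'i%C * rc b)).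
  by rewrite mulrDr addrA mulrCA.
rewrite cE in remz'; case: remz' => e0 e1.
have r10 : r1 = 0 by move/eqP: e1; rewrite mulf_eq0 (negbTE bn0) orbF => /eqP.
rewrite r10 mul0r addr0 in e0.
have rem0 : rem = 0.
  apply/polyP => i; rewrite coef0.
  case: i => [|[|i]]; first exact: e0.
    exact: r10.
  by rewrite nth_default //; apply: leq_trans srem _.
exists a, b, d; split => //; by rewrite qE rem0 addr0.
Qed.

End CRoot.
Section Luk.
Context {R : realType} {A : cstar_algebra R}.
Local Notation N := (@cs_norm R A).
Local Notation st := (@cs_star R A).
Local Notation pv := (@peval R A).

Lemma scD (a b : R) : sc (a + b) = sc a + sc b :> A.
Proof. by rewrite /sc rcD scalerDl. Qed.
Lemma scB (a b : R) : sc (a - b) = sc a - sc b :> A.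
Proof. by rewrite /sc rcB scalerBl. Qed.

Variables (f : A) (al be : R).
Hypotheses (fsa : st f = f) (hab : al <= be)
  (Pa : Pos f (f - sc al)) (Pb : Pos f (sc be - f)).

Lemma pv_lin (r : R) : pv ('X - r%:P) f = f - sc r.
Proof. by rewrite pevalB pevalX pevalC. Qed.

Lemma luk_n n (q : {poly R}) : (size q <= n)%N ->
  (forall t, al <= t <= be -> 0 < q.[t]) -> Pos f (pv q f).
Proof.
have hab' := hab; have Pa' := Pa; have Pb' := Pb; have fsa' := fsa.
elim: n q => [|n IH] q hs hq.
  have q0 : q = 0 by apply/eqP; rewrite -size_poly_eq0; move: hs; case: (size q).
  by have := hq al; rewrite q0 horner0 ltxx lexx hab => /(_ isT).
have qa := hq al; rewrite lexx hab /= in qa; have {}qa := qa isT.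
have q0 : q != 0 by apply/negP => /eqP q0; rewrite q0 horner0 ltxx in qa.
case: (leqP (size q) 1) => s1.
  rewrite (size1_polyC s1) pevalC; apply: Pos_sc; apply: ltW.
  by move: qa; rewrite {1}(size1_polyC s1) hornerC.
case: (pselect (exists r, root q r)) => [[r hr]|nr].
  have [q1 qE] := factor_theorem q r hr.
  have q10 : q1 != 0 by apply/negP => /eqP e; move: q0; rewrite qE e mul0r eqxx.
  have sq1 : (size q1 <= n)%N.
    move: hs; rewrite qE size_Mmonic ?monicXsubC // size_XsubC addn2 /= ltnS //.
  have hrq : forall t, q.[t] = q1.[t] * (t - r) by move=> t; rewrite qE hornerM hornerXsubC.
  have rout : r < al \/ be < r.
    case: (ltP r al) => h1; first by left.
    case: (ltP be r) => h2; first by right.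
    by move: (hq r); rewrite h1 h2 /= => /(_ isT); move/rootP: hr => ->; rewrite ltxx.
  case: rout => hr'.
    have hq1 : forall t, al <= t <= be -> 0 < q1.[t].
      move=> t ht; have := hq t ht; rewrite hrq pmulr_lgt0 //.
      by move/andP: ht => [h _]; rewrite subr_gt0; apply: lt_le_trans hr' h.
    rewrite qE pevalM pv_lin; apply: Pos_mul; first exact: IH.
    have -> : f - sc r = (f - sc al) + sc (al - r) by rewrite scB addrA subrK.
    by apply: Pos_add => //; apply: Pos_sc; rewrite subr_ge0 ltW.
  have qE' : q = (- q1) * (r%:P - 'X) by rewrite qE mulNr -mulrN opprB.
  have hq1 : forall t, al <= t <= be -> 0 < (- q1).[t].
    move=> t ht; have := hq t ht; rewrite hrq hornerN -mulrNN pmulr_lgt0 //.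
    by move/andP: ht => [_ h]; rewrite oppr_gt0 subr_lt0; apply: le_lt_trans h hr'.
  rewrite qE' pevalM pevalB pevalX pevalC; apply: Pos_mul.
    by apply: IH => //; rewrite size_polyN.
  have -> : sc r - f = (sc be - f) + sc (r - be) by rewrite scB [RHS]addrC addrA subrK.
  by apply: Pos_add => //; apply: Pos_sc; rewrite subr_ge0 ltW.
have nr' : forall r, ~~ root q r by move=> r; apply/negP => hr; apply: nr; exists r.
have [a [b [d [bn0 qE]]]] := no_real_root_factor nr' s1.
set m : {poly R} := ('X - a%:P)^+2 + (b^+2)%:P.
have sm : size m = 3%N.
  rewrite /m size_polyDl size_exp_XsubC //.
  by apply: leq_ltn_trans (size_polyC_leq1 _) _.
have m0 : m != 0 by rewrite -size_poly_eq0 sm.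
have d0 : d != 0 by apply/negP => /eqP e; move: q0; rewrite qE e mul0r eqxx.
have sd : (size d <= n)%N.
  move: hs; rewrite qE -/m size_mul // sm addn3 /= ltnS => h.
  by apply: leq_trans h; apply: leqW.
have b2 : 0 < b ^+ 2 by rewrite lt_def sqrf_eq0 bn0 sqr_ge0.
have mpos : forall t, 0 < m.[t].
  by move=> t; rewrite /m !hornerE; have := sqr_ge0 (t - a); lra.
have hd : forall t, al <= t <= be -> 0 < d.[t].
  by move=> t ht; have := hq t ht; rewrite qE hornerM pmulr_lgt0.
rewrite qE pevalM; apply: Pos_mul; first exact: IH.
rewrite pevalD pevalC expr2 pevalM pv_lin; apply: Pos_add; last by apply: Pos_sc; apply: ltW.
apply: Pos_sq; first by apply: Bc_sub; [exact: Bc_f | exact: Bc_sc].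
by rewrite stB fsa' stsc.
Qed.

Lemma luk (q : {poly R}) :
  (forall t, al <= t <= be -> 0 < q.[t]) -> Pos f (pv q f).
Proof. exact: luk_n (leqnn _). Qed.

End Luk.
Section Chi.
Context {R : realType}.

Lemma chi_ge0 (d t : R) : 0 < d -> 0 <= chi d t.
Proof.
move=> d0; rewrite /chi; case: ifP => // _; case: ifP => // h.
apply: divr_ge0; last by lra.
by rewrite subr_ge0 leNgt h.
Qed.

Lemma chi_le1 (d t : R) : 0 < d -> chi d t <= 1.
Proof.
move=> d0; rewrite /chi; case: ifP => h1 //; case: ifP => h2 //.
rewrite ler_pdivrMr; last by lra.
move/negbT: h1; rewrite -leNgt; lra.
Qed.

Lemma chi_supp (d t : R) : 0 < d -> chi d t != 0 -> `|t| <= d.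
Proof.
move=> d0; rewrite /chi; case: ifP => h1.
  by move=> _; apply: ltW; apply: lt_trans h1 _; lra.
by case: ifP => h2; [rewrite eqxx | move=> _; rewrite leNgt h2].
Qed.

Lemma nat_sep (i j : nat) : i != j -> 1 <= `|i%:R - j%:R : R|.
Proof.
move=> ne; case: (ltngtP i j) => h.
- rewrite distrC ger0_norm; last by rewrite subr_ge0 ler_nat ltnW.
  have hh : ((i.+1)%:R : R) <= j%:R by rewrite ler_nat.
  rewrite -natr1 in hh; lra.
- rewrite ger0_norm; last by rewrite subr_ge0 ler_nat ltnW.
  have hh : ((j.+1)%:R : R) <= i%:R by rewrite ler_nat.
  rewrite -natr1 in hh; lra.
- by move: ne; rewrite h eqxx.
Qed.

Lemma comb_sum n (eta t : R) : 0 < eta ->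
  \sum_(i < n) chi (eta / 4) (t + i%:R * eta) <= 1.
Proof.
move=> e0; have d0 : 0 < eta / 4 by lra.
case: (pselect (exists i : 'I_n, chi (eta / 4) (t + i%:R * eta) != 0)) => [[i0 hi0]|none].
  rewrite (bigD1 i0) //= big1 ?addr0; first exact: chi_le1.
  move=> j hj; apply/eqP; apply/negP; rewrite -/(is_true _) => /negP hjn.
  have a1 := chi_supp d0 hi0; have a2 := chi_supp d0 hjn.
  have hne : (j : nat) != i0 by [].
  have s := nat_sep hne.
  have : `|(j%:R - i0%:R) * eta| <= eta / 2.
    have -> : (j%:R - i0%:R) * eta = (t + j%:R * eta) - (t + i0%:R * eta) by ring.
    apply: le_trans (ler_normB _ _) _; lra.
  rewrite normrM (gtr0_norm e0) => h.
  have : 1 * eta <= `|j%:R - i0%:R : R| * eta by apply: ler_wpM2r => //; exact: ltW.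
  lra.
rewrite big1 ?ler01 // => i _; case: (eqVneq (chi (eta / 4) (t + i%:R * eta)) 0) => // h; exfalso; apply: none; by exists i.
Qed.

End Chi.
Section Shuffle.
Context {V : zmodType}.
Lemma sh1 (x y z : V) : x - (- y - z) = y + (x + z).
Proof. by rewrite opprB opprK [z + y]addrC addrCA. Qed.
Lemma sh2 (x y z : V) : y - z - x = y - (x + z).
Proof. by rewrite opprD addrA [y - z - x]addrAC. Qed.
End Shuffle.

Lemma scN {R : realType} {A : cstar_algebra R} (a : R) : sc (- a) = - sc a :> A.
Proof. by rewrite /sc rcN scaleNr. Qed.

Section Main.
Context {R : realType} {A : cstar_algebra R}.
Local Notation N := (@cs_norm R A).
Local Notation st := (@cs_star R A).
Local Notation pv := (@peval R A).

Lemma exists_max n (F : 'I_n.+1 -> R) : exists i0, forall j, F j <= F i0.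
Proof.
case: (@Order.TotalTheory.arg_maxP _ R _ ord0 xpredT F isT) => i0 _ H.
by exists i0 => j; exact: H.
Qed.

Lemma exists_min n (F : 'I_n.+1 -> R) : exists i0, forall j, F i0 <= F j.
Proof.
have [i0 H] := exists_max (fun i => - F i).
by exists i0 => j; have := H j; rewrite lerN2.
Qed.

Lemma cfc_spec (h : R -> R) (g : A) : exists bp : bool * (nat -> {poly R}),
  (forall e : R, 0 < e -> exists K : nat, forall k, (K <= k)%N ->
     forall t, `|t| <= N g -> `|(if bp.1 then h t else 0) - (bp.2 k).[t]| < e)
  /\ cvgA (fun k => pv (bp.2 k) g) (cfc h g).
Proof.
rewrite /cfc.
case: (pselect (exists l : A, exists p : nat -> {poly R},
    (forall e : R, 0 < e -> exists N : nat, forall k : nat, (N <= k)%N ->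
        forall t : R, `|t| <= cs_norm g -> `|h t - (p k).[t]| < e) /\
    (forall e : R, 0 < e -> exists N : nat, forall k : nat, (N <= k)%N ->
        cs_norm (peval (p k) g - l) < e))) => [ex|nex].
  have [p [h1 h2]] := xgetPex 0 ex.
  by exists (true, p).
rewrite xgetPN; last by move=> l hl; apply: nex; exists l.
exists (false, fun _ => 0); split => /=.
  by move=> e e0; exists 0%N => k _ t _; rewrite horner0 subrr normr0.
by move=> e e0; exists 0%N => k _; rewrite peval0 subrr N0.
Qed.

Lemma tau_re tau (ht : tracial_state tau) (x : A) : st x = x ->
  tau x = ((complex.Re (tau x))%:C)%C /\ `|complex.Re (tau x)| <= 2 * N x.
Proof. by move=> hx; have [a [ha hb]] := tau_sa ht hx; rewrite ha. Qed.

Lemma cvg_sa u l : cvgA u l -> (forall k, st (u k) = u k) -> st l = l.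
Proof.
move=> hu hs; apply: (cvg_uniq (cvg_st hu)); apply: cvg_ext hu => k; by rewrite hs.
Qed.

Lemma main_bound (f : A) (fsa : st f = f) (m : nat) (eta : R) (eta0 : 0 < eta)
  (tau : A -> R[i]) (ht : tracial_state tau) :
  exists r : 'I_m.+1 -> R,
    (forall i : 'I_m.+1, tau (cfc (chi (eta / 4)) (f + sc ((i : nat)%:R * eta))) = ((r i)%:C)%C)
    /\ \sum_(i < m.+1) r i <= 1.
Proof.
set n := m.+1.
set c := fun i : 'I_n => (i : nat)%:R * eta.
set g := fun i : 'I_n => f + sc (c i).
set l := fun i : 'I_n => cfc (chi (eta / 4)) (g i).
have gsa : forall i, st (g i) = g i by move=> i; rewrite /g cs_star_add fsa stsc.
have gB : forall i, Bc f (g i) by move=> i; apply: Bc_add; [exact: Bc_f | exact: Bc_sc].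
have [BP hBP] := choice (fun i => cfc_spec (chi (eta / 4)) (g i)).
set hB := fun (i : 'I_n) (s : R) => if (BP i).1 then chi (eta / 4) s else 0.
set P := fun i => (BP i).2.
have hBle : forall i s, hB i s <= chi (eta / 4) s.
  move=> i s; rewrite /hB; case: ifP => // _; apply: chi_ge0; lra.
have lsa : forall i, st (l i) = l i.
  move=> i; have [_ hc] := hBP i; apply: (cvg_sa hc) => k; exact: peval_sa.
set r := fun i => complex.Re (tau (l i)).
have hr : forall i, tau (l i) = ((r i)%:C)%C by move=> i; have [] := tau_re ht (lsa i).
exists r; split; first exact: hr.
apply/ler_addgt0Pr => th th0.
have n0 : (0 : R) < n%:R by rewrite ltr0n.
set th1 := th / (4 * n%:R).
have th10 : 0 < th1 by rewrite /th1 divr_gt0 // mulr_gt0.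
have hK : forall i, exists K : nat, forall k, (K <= k)%N ->
   (forall t, `|t| <= N (g i) -> `|hB i t - (P i k).[t]| < th1) /\ N (pv (P i k) (g i) - l i) < th1.
  move=> i; have [h1 h2] := hBP i.
  have [K1 HK1] := h1 _ th10; have [K2 HK2] := h2 _ th10.
  exists (maxn K1 K2) => k hk; split.
    by apply: HK1; apply: leq_trans hk; apply: leq_maxl.
  by apply: HK2; apply: leq_trans hk; apply: leq_maxr.
have [Kf hKf] := choice hK.
set k := (\max_(i : 'I_n) Kf i)%N.
have hk : forall i, (Kf i <= k)%N.
  by move=> i; apply: leq_bigmax.
have [i0 Hi0] := exists_max (fun i : 'I_n => - N (g i) - c i).
have [i1 Hi1] := exists_min (fun i : 'I_n => N (g i) - c i).
set al := - N (g i0) - c i0.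
set be := N (g i1) - c i1.
have Pa : Pos f (f - sc al).
  have -> : f - sc al = sc (N (g i0)) + g i0 by rewrite /al /g scB scN sh1.
  by apply: Pos_shift' => //; exact: lexx.
have Pb : Pos f (sc be - f).
  have -> : sc be - f = sc (N (g i1)) - g i1 by rewrite /be /g scB sh2.
  by apply: Pos_shift => //; exact: lexx.
have hab : al <= be.
  have [p [hp p0]] := tau_Pos ht (Pos_add Pa Pb).
  have E : f - sc al + (sc be - f) = sc (be - al) by rewrite scB addrC addrA subrK.
  rewrite E (tau_sc ht) in hp; move/rc_inj: hp; lra.
have tin : forall t, al <= t <= be -> forall i, `|t + c i| <= N (g i).
  move=> t /andP [h1 h2] i; have := Hi0 i; have := Hi1 i; rewrite /= -/al -/be => a1 a2.
  rewrite ler_norml; apply/andP; split; lra.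
set Q := \sum_(i < n) ((P i k) \Po ('X + (c i)%:P)).
have QE : forall t, Q.[t] = \sum_(i < n) (P i k).[t + c i].
  move=> t; rewrite /Q horner_sum; apply: eq_bigr => i _.
  by rewrite horner_comp hornerD hornerX hornerC.
have pvQ : pv Q f = \sum_(i < n) pv (P i k) (g i).
  rewrite /Q peval_sum; apply: eq_bigr => i _.
  by rewrite peval_comp pevalD pevalX pevalC.
have nth1 : 0 < n%:R * th1 by apply: mulr_gt0.
set C := 1 + 2 * (n%:R * th1).
have qpos : forall t, al <= t <= be -> 0 < (C%:P - Q).[t].
  move=> t htt; rewrite hornerD hornerN hornerC QE subr_gt0.
  have s1 : \sum_(i < n) (P i k).[t + c i] <= \sum_(i < n) (hB i (t + c i) + th1).
    apply: ler_sum => i _; have [h1 _] := hKf i k (hk i).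
    have := h1 _ (tin t htt i); rewrite ltr_norml => /andP [a b]; lra.
  rewrite big_split /= sumr_const card_ord -mulr_natl in s1.
  have s2 : \sum_(i < n) hB i (t + c i) <= \sum_(i < n) chi (eta / 4) (t + c i).
    by apply: ler_sum => i _; exact: hBle.
  have s3 : \sum_(i < n) chi (eta / 4) (t + c i) <= 1 := comb_sum n t eta0.
  rewrite /C; lra.
have hPos := luk fsa hab Pa Pb qpos.
have [p [hp p0]] := tau_Pos ht hPos.
rewrite pevalB pevalC pvQ (tauB ht) (tau_sc ht) (tau_sum ht) in hp.
set rho := fun i => complex.Re (tau (pv (P i k) (g i))).
have hrho : forall i, tau (pv (P i k) (g i)) = ((rho i)%:C)%C.
  by move=> i; have [] := tau_re ht (peval_sa (P i k) (gsa i)).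
rewrite (eq_bigr _ (fun i _ => hrho i)) -rc_sum -rcB in hp; move/rc_inj: hp => hp.
have hri : forall i, r i <= rho i + 2 * th1.
  move=> i; have sd : st (l i - pv (P i k) (g i)) = l i - pv (P i k) (g i).
    by rewrite stB lsa peval_sa.
  have [a [ha hb]] := tau_sa ht sd.
  rewrite (tauB ht) hr hrho -rcB in ha; move/rc_inj: ha => ha.
  have [_ h2] := hKf i k (hk i); rewrite NB in h2.
  have := ler_norm a; lra.
have sr : \sum_(i < n) r i <= \sum_(i < n) (rho i + 2 * th1) by apply: ler_sum.
rewrite big_split /= sumr_const card_ord -mulr_natl in sr.
have E : 4 * (n%:R * th1) = th by rewrite /th1; field; rewrite gt_eqF.
rewrite /C in hp; lra.
Qed.

End Main.
Unset Implicit Arguments.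

Theorem corollary3p9 (R : realType) (A : cstar_algebra R) (f : A)
    (hf : self_adjoint f) (eps : R) (heps : 0 < eps) :
  exists (n : nat) (delta : R) (fs : 'I_n -> A),
    [/\ (0 < n)%N, 0 < delta,
        forall i : 'I_n, self_adjoint (fs i) /\ cs_norm (f - fs i) < eps &
        forall tau : A -> R[i], tracial_state tau ->
          (n%:R)^-1 * \sum_(i < n) tau (cfc (chi delta) (fs i)) < ((eps)%:C)%C].
Proof.
have fsa : cs_star f = f := hf.
have ei : 0 <= eps^-1 by rewrite invr_ge0 ltW.
set m := Num.Def.archi_bound (eps^-1).
have hm : eps^-1 < m%:R := archi_boundP ei.
set n := m.+1.
have n0 : (0:R) < n%:R by rewrite ltr0n.
have hnm : (n%:R : R) = m%:R + 1 by rewrite /n -natr1.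
have hn : (n%:R : R)^-1 < eps.
  rewrite invf_plt //; lra.
set eta := eps / n%:R.
have eta0 : 0 < eta by rewrite /eta divr_gt0.
have etan : eta * n%:R = eps by rewrite /eta divfK // gt_eqF.
exists n, (eta / 4), (fun i : 'I_n => f + sc ((i : nat)%:R * eta)); split.
- by [].
- lra.
- move=> i; split.
    by rewrite /self_adjoint cs_star_add fsa stsc.
  rewrite opprD addrA subrr add0r NN; apply: le_lt_trans (N_sc _) _.
  rewrite ger0_norm; last by apply: mulr_ge0 => //; exact: ltW.
  have hi : ((i : nat)%:R : R) <= m%:R by rewrite ler_nat -ltnS.
  have : (i : nat)%:R * eta <= m%:R * eta by apply: ler_wpM2r => //; exact: ltW.
  rewrite hnm in etan; lra.
move=> tau ht.
have [r [hr hs]] := main_bound fsa m eta0 ht.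
rewrite (eq_bigr _ (fun i _ => hr i)) -rc_sum -rc_nat -rcV -rcM ltcR.
have ni : 0 < (n%:R : R)^-1 by rewrite invr_gt0.
have : (n%:R)^-1 * \sum_(i < n) r i <= (n%:R)^-1 * 1 by apply: ler_wpM2l => //; exact: ltW.
lra.
Qed.
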